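(* Let $A=(a_i)_{i=1,\dots,n}$ be a sequence of distinct integers between $1$ and $n$ whose permutation graph $G_A$ is bipartite, and let $I,J$ be maximum feasible sets for $A$. Suppose that $(A,I,J)$ has no forbidden pairs, and let $a_i,a_j$ be the elements of the leftmost mixed pile $P_t$, with $i\in I$ and $j\in J$. Then at least one of $(I\setminus\{i\})\cup\{j\}$ and $(J\setminus\{j\})\cup\{i\}$ is feasible.
   Context: A set $I\subseteq[n]$ is feasible for $A$ if $a_i<a_j$ for all $i,j\in I$ with $i<j$; a maximum feasible set is one of largest cardinality. The permutation graph $G_A$ has vertex set $[n]$ and, for $i<j$, an edge $\{i,j\}$ iff $a_i>a_j$. Piles: set $a_0=0$; start with empty piles $P_0,\dots,P_n$; for $i=0,1,\dots,n$ in order, put $a_i$ on top of the pile $P_j$ with smallest index $j$ such that $P_j$ is empty or the top element of $P_j$ is greater than $a_i$; let $P_0,\dots,P_k$ be the resulting nonempty piles. A pile is mixed if it contains exactly two elements $a_i$ and $a_j$ with $i\in I$ and $j\in J$ (with $i\ne j$, so that $i\notin J$, $j\notin I$). A mixed pile $P_t$ is the leftmost mixed pile if no pile $P_s$ with $s<t$ is mixed. A pair of mixed piles is a forbidden pair if the four vertices (indices) of their elements induce a cycle of length $4$ in $G_A$. *)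

(* Defs.v *)
From mathcomp Require Import all_boot finmap.
Set Implicit Arguments. Unset Strict Implicit. Unset Printing Implicit Defensive.
Local Open Scope fset_scope.

(* Indices follow the paper: positions 1..n; the sequence is a : nat -> nat,
   only its values on 1..n matter (a_0 := 0 is imposed in the pile process). *)

Definition in_range (n i : nat) : bool := (1 <= i) && (i <= n).

Definition distinct_seq (n : nat) (a : nat -> nat) : Prop :=
  (forall i, in_range n i -> in_range n (a i)) /\
  (forall i j, in_range n i -> in_range n j -> a i = a j -> i = j).

Definition feasible (a : nat -> nat) (I : {fset nat}) : Prop :=
  forall i j, i \in I -> j \in I -> i < j -> a i < a j.

Definition subset_n (n : nat) (I : {fset nat}) : Prop :=
  forall i, i \in I -> in_range n i.

Definition max_feasible (n : nat) (a : nat -> nat) (I : {fset nat}) : Prop :=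
  [/\ subset_n n I, feasible a I &
      forall K : {fset nat}, subset_n n K -> feasible a K -> #|` K| <= #|` I|].

Definition pg_edge (n : nat) (a : nat -> nat) (i j : nat) : bool :=
  [&& in_range n i, in_range n j &
      ((i < j) && (a j < a i)) || ((j < i) && (a i < a j))].

Definition bipartite_pg (n : nat) (a : nat -> nat) : Prop :=
  exists c : nat -> bool, forall i j, pg_edge n a i j -> c i != c j.

(* Piles. A pile is a stack of indices (top = head); pile P stores the
   elements a_k for the indices k in it. a_0 := 0. *)
Definition aval (a : nat -> nat) (k : nat) : nat := if k == 0 then 0 else a k.

Fixpoint put_on_pile (a : nat -> nat) (k : nat) (ps : seq (seq nat)) : seq (seq nat) :=
  match ps with
  | [::] => [::]
  | p :: ps' =>
      match p with
      | [::] => (k :: p) :: ps'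
      | top :: _ => if aval a k < aval a top then (k :: p) :: ps'
                    else p :: put_on_pile a k ps'
      end
  end.

Definition piles (n : nat) (a : nat -> nat) : seq (seq nat) :=
  foldl (fun ps k => put_on_pile a k ps) (nseq n.+1 [::]) (iota 0 n.+1).

Definition pile (n : nat) (a : nat -> nat) (t : nat) : seq nat :=
  nth [::] (piles n a) t.

Definition mixed_with (I J : {fset nat}) (P : seq nat) (i j : nat) : Prop :=
  [/\ i \in I, j \in J, i != j & perm_eq P [:: i; j]].

Definition mixed (I J : {fset nat}) (P : seq nat) : Prop :=
  exists i j, mixed_with I J P i j.

Definition leftmost_mixed (n : nat) (a : nat -> nat) (I J : {fset nat}) (t : nat) : Prop :=
  mixed I J (pile n a t) /\ forall s, s < t -> ~ mixed I J (pile n a s).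

Definition induces_C4 (n : nat) (a : nat -> nat) (S : seq nat) : Prop :=
  exists v1 v2 v3 v4,
    [/\ uniq [:: v1; v2; v3; v4], perm_eq S [:: v1; v2; v3; v4] &
      [/\ [&& pg_edge n a v1 v2, pg_edge n a v2 v3, pg_edge n a v3 v4 & pg_edge n a v4 v1],
          ~~ pg_edge n a v1 v3 & ~~ pg_edge n a v2 v4]].

Definition forbidden_pair (n : nat) (a : nat -> nat) (I J : {fset nat}) (s t : nat) : Prop :=
  [/\ s != t, mixed I J (pile n a s), mixed I J (pile n a t) &
      induces_C4 n a (pile n a s ++ pile n a t)].

Definition no_forbidden_pairs (n : nat) (a : nat -> nat) (I J : {fset nat}) : Prop :=
  forall s t, ~ forbidden_pair n a I J s t.

(* Main.v *)
Require Import Defs.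
From Stdlib Require Import Classical_Prop.
From mathcomp Require Import all_boot finmap.
From mathcomp Require Import zify.
Set Implicit Arguments. Unset Strict Implicit. Unset Printing Implicit Defensive.
Local Open Scope fset_scope.

Lemma put_spec (a : nat -> nat) (k : nat) (ps : seq (seq nat)) : has (@nilp nat) ps ->
  exists s, [/\ s < size ps,
    put_on_pile a k ps = set_nth [::] ps s (k :: nth [::] ps s),
    (forall s', s' < s -> exists top r, nth [::] ps s' = top :: r /\ aval a top <= aval a k) &
    (nth [::] ps s = [::] \/ exists top r, nth [::] ps s = top :: r /\ aval a k < aval a top)].
Proof.
elim: ps => [|p ps IH] //= Hh.
case: p Hh => [|top r] Hh /=.
  exists 0; split => //; try by case.
  by left.
case: ifP => Hlt.
  exists 0; split => //; try by case.
  by right; exists top, r.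
have [s [H1 H2 H3 H4]] := IH Hh.
exists s.+1; split => //; first by rewrite H2.
by case => [|s'] /= Hs; [exists top, r; split => //; lia | apply: H3].
Qed.

Section Inv.
Variables (n : nat) (a : nat -> nat).
Notation av := (aval a).

Record Inv (m : nat) (ps : seq (seq nat)) : Prop := {
 i_size : size ps = n.+1;
 i_lt : forall s x, x \in nth [::] ps s -> x < m;
 i_ex : forall x, x < m -> exists s, x \in nth [::] ps s;
 i_un : forall s s' x, x \in nth [::] ps s -> x \in nth [::] ps s' -> s = s';
 i_uniq : forall s, uniq (nth [::] ps s);
 i_dec : forall s x y, x \in nth [::] ps s -> y \in nth [::] ps s -> x < y -> av y < av x;
 i_top : forall s top r y, nth [::] ps s = top :: r -> y \in nth [::] ps s -> y <= top;
 i_tops : forall s s' top top' r r', s < s' -> nth [::] ps s = top :: r ->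
            nth [::] ps s' = top' :: r' -> av top <= av top';
 i_ne : forall s, nth [::] ps s != [::] -> s < m;
 i_pre : forall s s', s < s' -> nth [::] ps s' != [::] -> nth [::] ps s != [::];
 i_p2 : forall s x, x \in nth [::] ps s.+1 -> exists y, [/\ y \in nth [::] ps s, y < x & av y < av x];
 i_p1 : forall s s' x y, x \in nth [::] ps s -> y \in nth [::] ps s' -> x < y -> av x < av y -> s < s'
}.

Hypothesis Hd : forall x y, x <= n -> y <= n -> av x = av y -> x = y.

Lemma top_min m ps s top r x : Inv m ps -> nth [::] ps s = top :: r ->
  x \in nth [::] ps s -> av top <= av x.
Proof.
move=> HI Hs Hx.
have := i_top HI Hs Hx; rewrite leq_eqVlt; case/orP => [/eqP -> //|Hlt].
have Htop : top \in nth [::] ps s by rewrite Hs mem_head.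
by apply: ltnW; apply: (i_dec HI Hx Htop).
Qed.

Lemma inv0 : Inv 0 (nseq n.+1 [::]).
Proof.
have E : forall s, nth [::] (nseq n.+1 [::]) s = [::] :> seq nat.
  by move=> s; rewrite nth_nseq; case: ifP.
split => [|s x|x|s s' x|s|s x y|s top r y|s s' t t' r r'|s|s s'|s x|s s' x y]; rewrite ?size_nseq ?E ?in_nil ?ltn0 ?eqxx //.
Qed.

Lemma inv_step m ps : m <= n -> Inv m ps -> Inv m.+1 (put_on_pile a m ps).
Proof.
move=> Hm HI.
have Pm : nth [::] ps m = [::].
  by apply/eqP; apply/negPn/negP => /(i_ne HI); rewrite ltnn.
have Hh : has (@nilp nat) ps.
  apply/hasP; exists (nth [::] ps m); last by rewrite /nilp Pm.
  by apply: mem_nth; rewrite (i_size HI).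
have [s [Hs Hput Hskip Hplace]] := put_spec a m Hh.
rewrite Hput.
have NE : forall s', nth [::] (set_nth [::] ps s (m :: nth [::] ps s)) s' =
   if s' == s then m :: nth [::] ps s else nth [::] ps s'.
  by move=> s'; rewrite nth_set_nth.
have MEM : forall s' x, (x \in nth [::] (set_nth [::] ps s (m :: nth [::] ps s)) s') =
    ((s' == s) && (x == m)) || (x \in nth [::] ps s').
  move=> s' x; rewrite NE; case: eqP => [->|_] /=; rewrite ?in_cons //.
have oldlt := i_lt HI.
idtac.
have mnot : forall s', m \notin nth [::] ps s'.
  by move=> s'; apply/negP => H; have := oldlt _ _ H; rewrite ltnn.
split.
- by rewrite size_set_nth -(i_size HI); apply/maxn_idPr.
- move=> s' x; rewrite MEM => /orP [/andP [_ /eqP ->] //|/oldlt]; lia.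
- move=> x Hx; case: (ltngtP x m) => Hxm; [|lia|].
    have [s0 H0] := i_ex HI Hxm; exists s0; by rewrite MEM H0 orbT.
  by exists s; rewrite MEM Hxm !eqxx.
- move=> s1 s2 x; rewrite !MEM => /orP [/andP [/eqP E1 /eqP Ex]|H1] /orP [/andP [/eqP E2 /eqP Ex']|H2].
  + by rewrite E1 E2.
  + by move: H2; rewrite Ex (negbTE (mnot _)).
  + by move: H1; rewrite Ex' (negbTE (mnot _)).
  + exact: (i_un HI H1 H2).
- move=> s'; rewrite NE; case: eqP => _; last exact: (i_uniq HI).
  by rewrite /= mnot (i_uniq HI).
- move=> s' x y; rewrite !MEM.
  case/orP => [/andP [/eqP Es /eqP ->]|H1]; case/orP => [/andP [/eqP Es' /eqP ->]|H2].
  + by rewrite ltnn.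
  + by move/oldlt: H2 => H2 H3; lia.
  + move=> _; subst s'; case: Hplace => [Pe|[top [r [Pe Hlt]]]]; first by rewrite Pe in H1.
    have := top_min HI Pe H1; lia.
  + exact: (i_dec HI H1 H2).
- move=> s' top r y; rewrite NE; case: eqP => Es.
    case=> <- _; rewrite in_cons => /orP [/eqP -> //|/oldlt]; lia.
  exact: (i_top HI).
- move=> s1 s2 t1 t2 r1 r2 Hlt; rewrite !NE; case: eqP => E1; case: eqP => E2.
  + lia.
  + case=> <- _ H2; subst s1.
    case: Hplace => [Pe|[top [r [Pe Hl]]]].
      by move: (i_pre HI Hlt); rewrite H2 Pe; move/(_ isT).
    have := i_tops HI Hlt Pe H2; lia.
  + move=> H1 [<- _]; subst s2.
    have [top [r [Pe Hl]]] := Hskip _ Hlt.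
    by move: H1; rewrite Pe; case=> <- _.
  + exact: (i_tops HI).
- move=> s'; rewrite NE; case: (s' =P s) => [->|_]; last by move=> H; have := i_ne HI H; lia.
  move=> _; case: s Hs Hskip Hplace {Hput NE MEM} => [|s] // _ Hskip _.
  have [top [r [Pe _]]] := Hskip s (ltnSn s).
  have := i_ne HI (s := s); rewrite Pe => /(_ isT); lia.
- move=> s1 s2 Hlt; rewrite !NE; case: (s1 =P s) => E1 //; case: (s2 =P s) => E2.
    subst s2; have [top [r [Pe _]]] := Hskip _ Hlt; by rewrite Pe.
  exact: (i_pre HI).
- move=> s' x; rewrite MEM => /orP [/andP [/eqP Es /eqP ->]|Hx].
    have Hlt' : s' < s by rewrite -Es.
    have [top [r [Pe Hl]]] := Hskip s' Hlt'.
    have Ht : top \in nth [::] ps s' by rewrite Pe mem_head.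
    have Htm := oldlt _ _ Ht.
    exists top; split => //; first by rewrite MEM Ht orbT.
    rewrite ltn_neqAle Hl andbT; apply/eqP => E.
    have := Hd (x := top) (y := m); lia.
  have [y [Hy1 Hy2 Hy3]] := i_p2 HI Hx.
  by exists y; split => //; rewrite MEM Hy1 orbT.
- move=> s1 s2 x y; rewrite !MEM.
  case/orP => [/andP [/eqP Es /eqP ->]|H1]; case/orP => [/andP [/eqP Es' /eqP ->]|H2].
  + by rewrite ltnn.
  + by move/oldlt: H2 => H2 H3; lia.
  + move=> _ Hav; subst s2; rewrite ltnNge; apply/negP => Hle.
    have [top1 [r1 Pe1]] : exists top1 r1, nth [::] ps s1 = top1 :: r1.
      by case: (nth [::] ps s1) H1 => // t1 r1 _; exists t1, r1.
    have Hm1 := top_min HI Pe1 H1.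
    case: Hplace => [Pe|[top [r [Pe Hl]]]].
      move: Hle; rewrite leq_eqVlt => /orP [/eqP E|Hlt].
        by move: H1; rewrite -E Pe.
      by move: (i_pre HI Hlt); rewrite Pe1 Pe; move/(_ isT).
    move: Hle; rewrite leq_eqVlt => /orP [/eqP E|Hlt].
      subst s1; move: Pe1; rewrite Pe; case=> E1 _; subst top1; lia.
    have := i_tops HI Hlt Pe Pe1; lia.
  + exact: (i_p1 HI).
Qed.

Lemma inv_fold m : m <= n.+1 ->
  Inv m (foldl (fun ps k => put_on_pile a k ps) (nseq n.+1 [::]) (iota 0 m)).
Proof.
elim: m => [|m IH] Hm; first exact: inv0.
have -> : iota 0 m.+1 = iota 0 m ++ [:: m] by rewrite -addn1 iotaD.
rewrite foldl_cat /=.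
apply: inv_step; first lia.
apply: IH; lia.
Qed.

Lemma inv_piles : Inv n.+1 (piles n a).
Proof. exact: inv_fold. Qed.

End Inv.

Lemma memsep (I : {fset nat}) (Q : pred nat) x : (x \in [fset v in I | Q v]) = (x \in I) && Q x.
Proof. by rewrite !inE. Qed.

Definition fE := (in_fset0, in_fset1, in_fsetU, in_fset1U, in_fsetI, in_fsetD, in_fsetD1, memsep).
Definition Rr (I : {fset nat}) u := [fset v in I | u < v].

Section Main.
Variables (n : nat) (a : nat -> nat).
Hypothesis Hds : distinct_seq n a.

Lemma a_pos x : in_range n x -> 0 < a x.
Proof. by case: Hds => H _ /H; rewrite /in_range => /andP []. Qed.

Lemma a_inj x y : in_range n x -> in_range n y -> a x = a y -> x = y.
Proof. by case: Hds => _ H; apply: H. Qed.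

Lemma avE x : x != 0 -> aval a x = a x.
Proof. by rewrite /aval; case: eqP. Qed.

Lemma Hd : forall x y, x <= n -> y <= n -> aval a x = aval a y -> x = y.
Proof.
move=> x y Hx Hy; rewrite /aval.
case: (x =P 0) => [->|/eqP x0]; case: (y =P 0) => [->|/eqP y0] //.
- move=> E; have Ry : in_range n y by rewrite /in_range; lia.
  have := a_pos Ry; lia.
- move=> E; have Rx : in_range n x by rewrite /in_range; lia.
  have := a_pos Rx; lia.
- apply: a_inj; rewrite /in_range; lia.
Qed.

Let HI := inv_piles Hd.
Notation P s := (pile n a s).

Definition pp x := find (fun Q : seq nat => x \in Q) (piles n a).

Lemma pp_mem x : x <= n -> x \in P (pp x).
Proof.
move=> Hx; have Hx' : x < n.+1 by lia.
have [s Hs] := i_ex HI Hx'.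
have Hlt : s < size (piles n a).
  by rewrite ltnNge; apply/negP => H; rewrite nth_default in Hs.
have Hh : has (fun Q : seq nat => x \in Q) (piles n a).
  by apply/hasP; exists (nth [::] (piles n a) s) => //; apply: mem_nth.
exact: (nth_find [::] Hh).
Qed.

Lemma P_le x s : x \in P s -> x <= n.
Proof. by move/(i_lt HI). Qed.

Lemma pp_eq x s : x \in P s -> pp x = s.
Proof. move=> Hs; exact: (i_un HI (pp_mem (P_le Hs)) Hs). Qed.

Lemma pp0 : pp 0 = 0.
Proof.
have H := pp_mem (leq0n n); case E: (pp 0) H => [|s] // H.
by have [y [_ Hy _]] := i_p2 HI H.
Qed.

Lemma pp_p1 x y : x <= n -> y <= n -> x < y -> aval a x < aval a y -> pp x < pp y.
Proof. move=> Hx Hy; exact: (i_p1 HI (pp_mem Hx) (pp_mem Hy)). Qed.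

Lemma pp_pos x : in_range n x -> 0 < pp x.
Proof.
move=> Hx; rewrite -pp0; have := a_pos Hx; move: Hx; rewrite /in_range => Hx Ha.
apply: pp_p1; try lia.
rewrite /aval eqxx; case: eqP => [E|_]; lia.
Qed.

Lemma pp_p2 x s : x <= n -> pp x = s.+1 ->
  exists y, [/\ pp y = s, y < x & aval a y < aval a x].
Proof.
move=> Hx E; have H := pp_mem Hx; rewrite E in H.
have [y [Hy1 Hy2 Hy3]] := i_p2 HI H.
by exists y; split => //; apply: pp_eq.
Qed.

Lemma pp_dec x y : x <= n -> y <= n -> pp x = pp y -> x < y -> aval a y < aval a x.
Proof.
move=> Hx Hy E; have Hx' := pp_mem Hx; rewrite E in Hx'.
exact: (i_dec HI Hx' (pp_mem Hy)).
Qed.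

Lemma sub_ne0 F x : subset_n n F -> x \in F -> x != 0.
Proof. by move=> HF /HF; rewrite /in_range; case: x. Qed.

Lemma sub_le F x : subset_n n F -> x \in F -> x <= n.
Proof. by move=> HF /HF; rewrite /in_range => /andP []. Qed.

Lemma feas_pp F u v : subset_n n F -> feasible a F -> u \in F -> v \in F -> u < v -> pp u < pp v.
Proof.
move=> HF Hf Hu Hv Huv; apply: pp_p1; rewrite ?(sub_le HF) //.
rewrite !avE ?(sub_ne0 HF) //; exact: Hf.
Qed.

Lemma feas_pp' F u v : subset_n n F -> feasible a F -> u \in F -> v \in F -> pp u < pp v ->
  u < v /\ a u < a v.
Proof.
move=> HF Hf Hu Hv Hp; case: (ltngtP u v) => H.
- by split => //; apply: Hf.
- by have := feas_pp HF Hf Hv Hu H; lia.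
- by subst; lia.
Qed.

Lemma feas_inj F u v : subset_n n F -> feasible a F -> u \in F -> v \in F -> pp u = pp v -> u = v.
Proof.
move=> HF Hf Hu Hv E; case: (ltngtP u v) => H //.
- by have := feas_pp HF Hf Hu Hv H; lia.
- by have := feas_pp HF Hf Hv Hu H; lia.
Qed.

Lemma chain s : forall x, x <= n -> pp x = s -> exists C : {fset nat},
  [/\ subset_n n C, feasible a C, #|` C| = s &
      forall c, c \in C -> c <= x /\ aval a c <= aval a x].
Proof.
elim: s => [|s IH] x Hx E.
  by exists fset0; split => //; solve [move=> ?; rewrite inE | move=> ? ?; rewrite inE].
have [y [Ey Hyx Hav]] := pp_p2 Hx E.
have [C [C1 C2 C3 C4]] := IH y (ltnW (leq_trans Hyx Hx)) Ey.
have x0 : x != 0 by apply/eqP => x0; move: E; rewrite x0 pp0.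
have xC : x \notin C by apply/negP => /C4 [H _]; lia.
exists (x |` C); split.
- move=> c; rewrite !inE => /orP [/eqP ->|/C1] //; rewrite /in_range; lia.
- move=> c1 c2; rewrite !inE => /orP [/eqP ->|H1] /orP [/eqP ->|H2] Hlt.
  + lia.
  + by have [? _] := C4 _ H2; lia.
  + have [_ ?] := C4 _ H1; rewrite -(avE (sub_ne0 C1 H1)) -(avE x0); lia.
  + exact: C2.
- by rewrite cardfsU1 xC C3.
- move=> c; rewrite !inE => /orP [/eqP ->|/C4 [? ?]]; lia.
Qed.

Definition L (I : {fset nat}) u := [fset v in I | v < u].
Definition Rg k := [fset s in iota 1 k].

Lemma card_Rg k : #|` Rg k| = k.
Proof. by rewrite /Rg card_fseq undup_id ?iota_uniq // size_iota. Qed.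

Lemma img_sub F u : subset_n n F -> feasible a F -> u \in F ->
  pp @` L F u `<=` Rg (pp u).-1.
Proof.
move=> HF Hf Hu; apply/fsubsetP => s /imfsetP [v /=]; rewrite memsep => /andP [Hv Hvu] ->.
have := feas_pp HF Hf Hv Hu Hvu; have := pp_pos (HF _ Hv).
rewrite /Rg !inE mem_iota; lia.
Qed.

Lemma card_img F u : subset_n n F -> feasible a F -> #|` pp @` L F u| = #|` L F u|.
Proof.
move=> HF Hf; apply/eqP; apply/card_in_imfsetP => x y; rewrite /L !memsep => /andP [Hx _] /andP [Hy _] E.
exact: (feas_inj HF Hf Hx Hy E).
Qed.

Lemma cnt_ge F u : subset_n n F -> feasible a F -> u \in F -> #|` L F u| < pp u.
Proof.
move=> HF Hf Hu; rewrite -(card_img u HF Hf).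
have := fsubset_leq_card (img_sub HF Hf Hu); rewrite card_Rg.
have := pp_pos (HF _ Hu); lia.
Qed.

Lemma cnt_le I u : max_feasible n a I -> u \in I -> pp u <= (#|` L I u|).+1.
Proof.
case=> HF Hf Hmax Hu.
have [C [C1 C2 C3 C4]] := chain (sub_le HF Hu) (erefl (pp u)).

have Hu0 := sub_ne0 HF Hu.
have HK := Hmax (C `|` Rr I u).
have CR : C `&` Rr I u = fset0.
  apply/fsetP => z; rewrite /Rr /L !fE ; apply/negP => /andP [/C4 [? _] /andP [_ ?]]; lia.
have EI : I = L I u `|` (u |` Rr I u).
  apply/fsetP => z; rewrite /Rr /L !fE; case: (ltngtP z u) => H; rewrite ?andbT ?andbF ?orbF //=.
  by subst; rewrite Hu.
have LR : L I u `&` (u |` Rr I u) = fset0.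
  apply/fsetP => z; rewrite /Rr /L !fE; apply/negbTE/negP => /andP [/andP [_ H1] /orP [/eqP H2|/andP [_ H3]]]; lia.
have uR : u \notin Rr I u by rewrite /Rr memsep ltnn andbF.
have cI := cardfsUI (L I u) (u |` Rr I u); rewrite -EI LR cardfs0 cardfsU1 uR addn0 in cI.
have cK := cardfsUI C (Rr I u); rewrite CR cardfs0 addn0 C3 in cK.
suff : #|` C `|` Rr I u| <= #|` I| by lia.
apply: HK.
- move=> z; rewrite /Rr /L !fE => /orP [/C1 //|/andP [/HF //]].
- move=> x y; rewrite /Rr /L !fE => /orP [Hx|/andP [Hx Hux]] /orP [Hy|/andP [Hy Huy]] Hxy.
  + exact: C2.
  + have [? Ha] := C4 _ Hx; have := Hf _ _ Hu Hy Huy.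
    rewrite -(avE (sub_ne0 C1 Hx)) -(avE Hu0); lia.
  + by have [? _] := C4 _ Hy; lia.
  + exact: Hf.
Qed.

Lemma ex_pile I u s : max_feasible n a I -> u \in I -> 0 < s <= pp u ->
  exists v, [/\ v \in I, pp v = s & v <= u].
Proof.
move=> HI' Hu Hs; have HI0 := HI'; case: HI0 => HF Hf _.
case: (ltngtP s (pp u)) => Hsu; [|lia|by exists u].
have Hge := cnt_ge HF Hf Hu; have Hle := cnt_le HI' Hu.
have E : pp @` L I u == Rg (pp u).-1.
  rewrite eqEfcard img_sub //= card_Rg (card_img u HF Hf); lia.
have : s \in Rg (pp u).-1 by rewrite /Rg !inE mem_iota; lia.
rewrite -(eqP E) => /imfsetP [v /=]; rewrite memsep => /andP [Hv Hvu] ->.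
by exists v; split => //; apply: ltnW.
Qed.

Lemma pile_ne0 s x : 0 < s -> x \in P s -> in_range n x.
Proof.
move=> Hs Hx; rewrite /in_range (P_le Hx) andbT lt0n; apply/eqP => x0.
by move: Hx; rewrite x0 => /pp_eq; rewrite pp0; lia.
Qed.

Lemma pile_edge s x y : 0 < s -> x \in P s -> y \in P s -> x != y -> pg_edge n a x y.
Proof.
move=> Hs Hx Hy Hxy; have Rx := pile_ne0 Hs Hx; have Ry := pile_ne0 Hs Hy.
have E : pp x = pp y by rewrite (pp_eq Hx) (pp_eq Hy).
have x0 : x != 0 by move: Rx; rewrite /in_range; case: x {Hx Hxy E}.
have y0 : y != 0 by move: Ry; rewrite /in_range; case: y {Hy Hxy E}.
rewrite /pg_edge Rx Ry /=; case: (ltngtP x y) => H.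
- have := pp_dec (P_le Hx) (P_le Hy) E H; rewrite !avE //; lia.
- have := pp_dec (P_le Hy) (P_le Hx) (esym E) H; rewrite !avE //; lia.
- by subst; rewrite eqxx in Hxy.
Qed.

Lemma pile2 s u v : bipartite_pg n a -> 0 < s -> u \in P s -> v \in P s -> u != v ->
  perm_eq (P s) [:: u; v].
Proof.
move=> [c Hc] Hs Hu Hv Huv; apply: uniq_perm.
- exact: (i_uniq HI).
- by rewrite /= inE Huv.
move=> z; rewrite !inE; apply/idP/idP; last first.
  by case/orP => /eqP ->.
move=> Hz; apply/negPn/negP; rewrite negb_or => /andP [Hzu Hzv].
have H1 := Hc _ _ (pile_edge Hs Hu Hv Huv).
have H2 := Hc _ _ (pile_edge Hs Hz Hu Hzu).
have H3 := Hc _ _ (pile_edge Hs Hz Hv Hzv).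
by move: H1 H2 H3; case: (c u); case: (c v); case: (c z).
Qed.

End Main.

Lemma perm2C (i j : nat) : perm_eq [:: i; j] [:: j; i].
Proof. by apply/permP => q /=; rewrite !addn0 addnC. Qed.

Lemma mixed_sym I J Q : mixed I J Q -> mixed J I Q.
Proof.
case=> i [j [H1 H2 H3 H4]]; exists j, i; split => //; first by rewrite eq_sym.
exact: (perm_trans H4 (perm2C i j)).
Qed.

Lemma mixed_with_sym I J Q i j : mixed_with I J Q i j -> mixed_with J I Q j i.
Proof.
case=> H1 H2 H3 H4; split => //; first by rewrite eq_sym.
exact: (perm_trans H4 (perm2C i j)).
Qed.

Lemma uniq4 (i j w w' : nat) : i < j -> j < w' -> w < j -> i < w -> uniq [:: i; j; w; w'].
Proof. move=> *; rewrite /= !inE; lia. Qed.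

Lemma edge_lr n (a : nat -> nat) x y : in_range n x -> in_range n y -> x < y -> a y < a x -> pg_edge n a x y.
Proof. by move=> Hx Hy H1 H2; rewrite /pg_edge Hx Hy H1 H2. Qed.

Lemma edge_rl n (a : nat -> nat) x y : in_range n x -> in_range n y -> y < x -> a x < a y -> pg_edge n a x y.
Proof. by move=> Hx Hy H1 H2; rewrite /pg_edge Hx Hy H1 H2 orbT. Qed.

Lemma nonedge n (a : nat -> nat) x y : x < y -> a x < a y -> ~~ pg_edge n a x y.
Proof. move=> H1 H2; rewrite /pg_edge; apply/negP => /and3P [_ _]; lia. Qed.

Ltac slia := repeat match goal with
 | H : is_true (_ <= _) |- _ => revert H
 | H : (_ = _ :> nat) |- _ => revert H
 | H : is_true (_ != _) |- _ => revert H
 | H : is_true (~~ (_ == _)) |- _ => revert H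
 end;
 repeat match goal with H : _ |- _ => clear H end; intros; lia.

Section Core.
Variables (n : nat) (a : nat -> nat).
Hypothesis Hds : distinct_seq n a.
Notation P s := (pile n a s).
Notation pp := (pp n a).

Lemma core (I J : {fset nat}) (t i j : nat) :
  bipartite_pg n a ->
  max_feasible n a I ->
  max_feasible n a J ->
  no_forbidden_pairs n a I J ->
  leftmost_mixed n a I J t ->
  mixed_with I J (P t) i j -> i < j ->
  feasible a ((I `\ i) `|` [fset j]) \/ feasible a ((J `\ j) `|` [fset i]).
Proof.
move=> Hb HmI HmJ Hnf [Hmt Hleft] Hmw Hij.
have HmI' := HmI; have HmJ' := HmJ.
case: HmI' => HFI HfI _; case: HmJ' => HFJ HfJ _.
case: (Hmw) => iI jJ ij Hperm.
have iP : i \in P t by rewrite (perm_mem Hperm) !inE eqxx.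
have jP : j \in P t by rewrite (perm_mem Hperm) !inE eqxx orbT.
have Ri := HFI _ iI; have Rj := HFJ _ jJ.
have ppi : pp i = t := pp_eq Hds iP.
have ppj : pp j = t := pp_eq Hds jP.
have aji : a j < a i.
  have := pp_dec Hds (sub_le HFI iI) (sub_le HFJ jJ) (etrans ppi (esym ppj)) Hij.
  by rewrite !avE ?(sub_ne0 HFI iI) ?(sub_ne0 HFJ jJ).
have shared : 1 < t -> exists u, [/\ u \in I, u \in J & pp u = t.-1].
  move=> Ht.
  have [u [uI ppu _]] := ex_pile Hds HmI iI (s := t.-1) (ltac:(rewrite ppi; slia)).
  have [u' [uJ ppu' _]] := ex_pile Hds HmJ jJ (s := t.-1) (ltac:(rewrite ppj; slia)).
  case: (u =P u') => [E|/eqP uu']; first by subst u'; exists u.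
  exfalso; apply: (Hleft t.-1); first slia.
  exists u, u'; split => //.
  apply: pile2 => //; first slia.
  - by rewrite -ppu; apply: (pp_mem Hds); apply: (sub_le HFI uI).
  - by rewrite -ppu'; apply: (pp_mem Hds); apply: (sub_le HFJ uJ).
have lowI : forall v, v \in I -> v < i -> a v < a j.
  move=> v vI vi.
  have pv := feas_pp Hds HFI HfI vI iI vi; have := pp_pos Hds (HFI _ vI) => pv0.
  have [u [uI uJ ppu]] := shared (ltac:(slia)).
  have vu : v <= u.
    rewrite leqNgt; apply/negP => uv; have := feas_pp Hds HFI HfI uI vI uv; slia.
  have [uj auj] := feas_pp' Hds HFJ HfJ uJ jJ (ltac:(slia)).
  move: vu; rewrite leq_eqVlt => /orP [/eqP -> //|vu].
  have := HfI _ _ vI uI vu; slia.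
have lowJ : forall v, v \in J -> v < j -> v < i.
  move=> v vJ vj.
  have pv := feas_pp Hds HFJ HfJ vJ jJ vj; have := pp_pos Hds (HFJ _ vJ) => pv0.
  have [u [uI uJ ppu]] := shared (ltac:(slia)).
  have vu : v <= u.
    rewrite leqNgt; apply/negP => uv; have := feas_pp Hds HFJ HfJ uJ vJ uv; slia.
  have [ui _] := feas_pp' Hds HFI HfI uI iI (ltac:(slia)).
  slia.
case: (Classical_Prop.classic (exists v, [/\ v \in I, i < v & v <= j])) => [[v [vI iv vj]]|HupI]; last first.
  left => x y; rewrite !fE => /orP [/andP [xi xI]|/eqP ->] /orP [/andP [yi yI]|/eqP ->] xy.
  - exact: HfI.
  - case: (ltngtP x i) => xi'; first exact: lowI.
    + by exfalso; apply: HupI; exists x; split => //; slia.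
    + by move: xi; rewrite xi' eqxx.
  - case: (ltngtP y i) => yi'; first slia.
    + have := HfI _ _ iI yI yi'; slia.
    + by move: yi; rewrite yi' eqxx.
  - slia.
case: (Classical_Prop.classic (exists v, [/\ v \in J, j < v & a v <= a i])) => [[v' [vJ jv avi]]|HupJ]; last first.
  right => x y; rewrite !fE => /orP [/andP [xj xJ]|/eqP ->] /orP [/andP [yj yJ]|/eqP ->] xy.
  - exact: HfJ.
  - case: (ltngtP x j) => xj'.
    + have := HfJ _ _ xJ jJ xj'; slia.
    + slia.
    + by move: xj; rewrite xj' eqxx.
  - case: (ltngtP y j) => yj'.
    + have := lowJ _ yJ yj'; slia.
    + rewrite ltnNge; apply/negP => H; apply: HupJ; exists y; split => //.
    + by move: yj; rewrite yj' eqxx.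
  - slia.
exfalso.
have vj' : v != j.
  apply/eqP => E; subst v.
  have := feas_inj Hds HFI HfI iI vI (etrans ppi (esym ppj)); slia.
have ppv := feas_pp Hds HFI HfI iI vI iv.
have [w [wI ppw wv]] := ex_pile Hds HmI vI (s := t.+1) (ltac:(slia)).
have ppv' := feas_pp Hds HFJ HfJ jJ vJ jv.
have [w' [wJ ppw' wv']] := ex_pile Hds HmJ vJ (s := t.+1) (ltac:(slia)).
have [iw aiw] := feas_pp' Hds HFI HfI iI wI (ltac:(slia)).
have [jw' ajw'] := feas_pp' Hds HFJ HfJ jJ wJ (ltac:(slia)).
have aw'v : a w' <= a v'.
  move: wv'; rewrite leq_eqVlt => /orP [/eqP -> //|H]; have := HfJ _ _ wJ vJ H; slia.
have avi' : a v' < a i.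
  rewrite ltn_neqAle avi andbT; apply/eqP => E.
  have := a_inj Hds (HFJ _ vJ) Ri E; slia.
have wj : w < j by slia.
have Rw := HFI _ wI; have Rw' := HFJ _ wJ.
have wP : w \in P t.+1 by rewrite -ppw; apply: (pp_mem Hds); apply: (sub_le HFI wI).
have w'P : w' \in P t.+1 by rewrite -ppw'; apply: (pp_mem Hds); apply: (sub_le HFJ wJ).
have ww' : w != w' by rewrite neq_ltn (ltn_trans wj jw').
have Hp2 := pile2 Hds Hb (ltn0Sn t) wP w'P ww'.
apply: (Hnf t t.+1); split.
- by rewrite neq_ltn ltnSn.
- by exists i, j.
- by exists w, w'.
exists i, j, w, w'; split.
- exact: uniq4.
- by rewrite -[[:: i; j; w; w']]/([:: i; j] ++ [:: w; w']); apply: perm_cat.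
split; [apply/and4P; split | | ].
- exact: (edge_lr Ri Rj Hij aji).
- apply: (edge_rl Rj Rw wj); slia.
- apply: (edge_lr Rw Rw'); slia.
- apply: (edge_rl Rw' Ri); slia.
- exact: (nonedge _ iw aiw).
- exact: (nonedge _ jw' ajw').
Qed.

End Core.

Theorem lemma4 (n : nat) (a : nat -> nat) (I J : {fset nat}) (t i j : nat) :
  distinct_seq n a ->
  bipartite_pg n a ->
  max_feasible n a I ->
  max_feasible n a J ->
  no_forbidden_pairs n a I J ->
  leftmost_mixed n a I J t ->
  mixed_with I J (pile n a t) i j ->
  feasible a ((I `\ i) `|` [fset j]) \/ feasible a ((J `\ j) `|` [fset i]).
Proof.
move=> Hds Hb HI HJ Hnf Hlm Hmw.
have [_ _ ij _] := Hmw.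
have Hnf' : no_forbidden_pairs n a J I.
  move=> s u [H1 H2 H3 H4]; apply: (Hnf s u); split => //; exact: mixed_sym.
have Hlm' : leftmost_mixed n a J I t.
  case: Hlm => H1 H2; split; first exact: mixed_sym.
  by move=> s Hs /mixed_sym; apply: H2.
case: (ltngtP i j) => H.
- exact: (core Hds Hb HI HJ Hnf Hlm Hmw H).
- by case: (core Hds Hb HJ HI Hnf' Hlm' (mixed_with_sym Hmw) H) => X; [right|left].
- by move: ij; rewrite H eqxx.
Qed.
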